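(* Let $\alpha=1+\sqrt2$. Then for every integer $n\ge1$, $$\Big\lceil \alpha n-\tfrac{1}{\sqrt2}\Big\rceil-\alpha n+\tfrac{1}{\sqrt2}>\frac{\alpha-1}{4\alpha n}.$$ *)

(* Defs.v *)
From Stdlib Require Import Reals.
Open Scope R_scope.

(* Floor via Stdlib's Int_part (= up x - 1, the greatest integer <= x);
   ceiling defined as -floor(-x): the least integer >= x. *)
Definition Rfloor (x : R) : Z := Int_part x.
Definition Rceil (x : R) : Z := (- Rfloor (- x))%Z.

Definition alpha : R := 1 + sqrt 2.

(* Main.v *)
Require Import Defs.
From Stdlib Require Import Reals Lra Lia Psatz ZArith.
Open Scope R_scope.

Theorem mainTheorem7 (n : nat) (hn : (1 <= n)%nat) :
  IZR (Rceil (alpha * INR n - 1 / sqrt 2)) - alpha * INR n + 1 / sqrt 2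
    > (alpha - 1) / (4 * alpha * INR n).
Proof.
  set (q := sqrt 2).
  assert (Hs2 : q * q = 2) by (apply sqrt_sqrt; lra).
  assert (Hs : 1 < q).
  { rewrite <- sqrt_1. apply sqrt_lt_1; lra. }
  assert (Hs' : q < 2) by nra.
  set (x := alpha * INR n - 1 / q).
  assert (Hm : IZR (Rceil x) >= x /\ IZR (Rceil x) < x + 1).
  { unfold Rceil, Rfloor. rewrite opp_IZR.
    destruct (base_Int_part (- x)). lra. }
  set (m := Rceil x) in Hm |- *.
  assert (Hn : 1 <= INR n) by (apply (le_INR 1); exact hn).
  set (N := Z.of_nat n).
  assert (HN : IZR N = INR n) by (unfold N; rewrite <- INR_IZR_INZ; reflexivity).
  set (d := IZR m - x).
  assert (Hx : x = (1 + q) * INR n - 1 / q) by reflexivity.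
  assert (Hinv : 1 / q = q / 2) by (apply (Rmult_eq_reg_r (2*q)); [unfold Rdiv; field_simplify; lra|lra]; lra).
  set (K := (m - N)%Z).
  assert (HK : q * IZR K = q * d + 2 * INR n - 1).
  { unfold K, d. rewrite minus_IZR, HN, Hx, Hinv. nra. }
  set (z := (2 * (K * K - 2 * N * N + 2 * N) - 1)%Z).
  assert (Hz : IZR z = 2 * (2 * INR n - 1) * q * d + 2 * d * d).
  { assert (E : IZR z = 2 * (IZR K * IZR K) - (2 * INR n - 1) ^ 2).
    { unfold z. rewrite minus_IZR, !mult_IZR, plus_IZR, minus_IZR, !mult_IZR, HN.
      simpl. ring. }
    rewrite E.
    assert (E2 : 2 * (IZR K * IZR K) = (q * IZR K) * (q * IZR K)) by nra.
    rewrite E2, HK. nra. }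
  assert (Hd0 : 0 <= d) by (unfold d; lra).
  assert (Hd1 : d < 1) by (unfold d; lra).
  assert (Hz0 : (0 <= z)%Z).
  { apply le_IZR. rewrite Hz. assert (0 <= (2 * INR n - 1) * q * d) by
      (apply Rmult_le_pos; [apply Rmult_le_pos|]; lra). nra. }
  assert (Hz1 : (1 <= z)%Z) by (unfold z in *; lia).
  apply IZR_le in Hz1. rewrite Hz in Hz1.
  replace (IZR m - alpha * INR n + 1 / q) with d by (unfold d, x; ring).
  unfold alpha. fold q.
  replace (1 + q - 1) with q by ring.
  apply Rlt_gt.
  apply Rmult_lt_reg_r with (4 * (1 + q) * INR n).
  { nra. }
  unfold Rdiv. rewrite Rmult_assoc, Rinv_l by nra. rewrite Rmult_1_r.
  destruct (Rle_lt_dec (d * (4 * (1 + q) * INR n)) q) as [H|H]; [|exact H].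
  exfalso.
  assert (Hb : d * (4 * INR n + 2 * q * INR n) <= 1).
  { replace (4 * INR n + 2 * q * INR n) with ((4 * (1 + q) * INR n) * (q / 2)).
    2: { field_simplify. nra. }
    assert (0 < q/2) by lra. nra. }
  assert (Hlt : 2 * (2 * INR n - 1) * q * d + 2 * d * d
                < d * (4 * q * INR n - 2 * q + 2)) by nra.
  assert (d * (4 * q * INR n - 2 * q + 2) <= d * (4 * INR n + 2 * q * INR n)) by nra.
  lra.
Qed.
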